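(* Let $\mathcal{A}$ be a central and essential arrangement in $\mathbb{Q}^l$ as in the context, $\sigma$ a term ordering, and $p$ a prime that is good and $(\sigma,l)$-lucky for $\mathcal{A}$. Let $q$ be a power of $p$. Then $$\overline{\chi}_{\mathcal{A}}(q,t)=\sum_{P\in\mathbb{F}_q^l}t^{h(P)},$$ where $h(P)$ is the number of hyperplanes of $\mathcal{A}_{\mathbb{F}_q}$ containing $P$.
   Context: $\mathcal{A}=\{H_1,\dots,H_n\}$: $n$ distinct linear hyperplanes in $\mathbb{Q}^l$ with $\bigcap H_i=\{0\}$, $H_i=\{\alpha_i=0\}$, $\alpha_i\in\mathbb{Z}[x_1,\dots,x_l]$ a nonzero linear form whose coefficients are not all divisible by any prime, $Q(\mathcal{A})=\prod\alpha_i$. $p$ is good if the reduction of $Q(\mathcal{A})$ mod $p$ is reduced (no reduction $(\alpha_i)_p$ is a scalar multiple of $(\alpha_j)_p$, $i<j$). $\mathcal{A}_{\mathbb{F}_q}$ is the arrangement in $\mathbb{F}_q^l$ defined by the image of $Q(\mathcal{A})$ in $\mathbb{F}_q[x_1,\dots,x_l]$, i.e. the hyperplanes $\{\bar\alpha_i=0\}$. For a term ordering $\sigma$ and nonzero $f\in\mathbb{Z}[x_1,\dots,x_l]$, $\mathrm{LM}_\sigma(f)$ is the $\sigma$-leading term times its coefficient $\mathrm{LC}_\sigma(f)$. A minimal strong $\sigma$-Gröbner basis of an ideal $I\subseteq\mathbb{Z}[x_1,\dots,x_l]$ is a finite generating set $G$ of nonzero elements of $I$ such that every nonzero $f\in I$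 has $\mathrm{LM}_\sigma(f)$ divisible by some $\mathrm{LM}_\sigma(g)$, $g\in G$, and no $\mathrm{LM}_\sigma(g)$ divides $\mathrm{LM}_\sigma(g')$ for distinct $g,g'$; its set of leading coefficients is independent of the choice. $p$ is $\sigma$-lucky for $I$ if it divides none of these leading coefficients; $p$ is $(\sigma,l)$-lucky for $\mathcal{A}$ if it is $\sigma$-lucky for every ideal $\langle\alpha_{i_1},\dots,\alpha_{i_l}\rangle$ with $i_1<\dots<i_l$ and $\operatorname{codim}(H_{i_1}\cap\dots\cap H_{i_l})=l$. The coboundary polynomial is $\overline{\chi}_{\mathcal{A}}(x,y)=\sum_{\mathcal{B}\subseteq\mathcal{A}}x^{\mathrm{rk}(\mathcal{A})-\mathrm{rk}(\mathcal{B})}(y-1)^{|\mathcal{B}|}$, where $\mathrm{rk}(\mathcal{B})=\operatorname{codim}\bigcap_{H\in\mathcal{B}}H$ (the sum is over all subsets since $\mathcal{A}$ is central). *)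

(* Defs.v *)
From HB Require Import structures.
From mathcomp Require Import all_boot all_order all_algebra all_field.
From mathcomp Require Import mpoly.
Set Implicit Arguments. Unset Strict Implicit. Unset Printing Implicit Defensive.
Import Order.TTheory GRing.Theory Num.Theory.
Local Open Scope ring_scope.

Definition is_term_order (l : nat) (le : rel 'X_{1..l}) : Prop :=
  (forall m, le m m) /\
  [/\ (forall m1 m2, le m1 m2 -> le m2 m1 -> m1 = m2),
      (forall m1 m2 m3, le m1 m2 -> le m2 m3 -> le m1 m3),
      (forall m1 m2, le m1 m2 || le m2 m1),
      (forall m, le 0%MM m) &
      (forall m1 m2 m, le m1 m2 -> le (m1 + m)%MM (m2 + m)%MM)].

(* sigma-leading monomial (exponent vector) of f: the le-largest      *)
(* monomial in the support of f (meaningful for f != 0).              *)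
Definition lead_mnm (l : nat) (le : rel 'X_{1..l}) (f : {mpoly int[l]}) : 'X_{1..l} :=
  foldr (fun m acc => if le acc m then m else acc) 0%MM (msupp f).

Definition lead_cf (l : nat) (le : rel 'X_{1..l}) (f : {mpoly int[l]}) : int :=
  f@_(lead_mnm le f).

(* LM_sigma(g) divides LM_sigma(f) in Z[x]:  LC(g) x^a | LC(f) x^b     *)
(* iff LC(g) | LC(f) in Z and x^a | x^b.                               *)
Definition LM_dvd (l : nat) (le : rel 'X_{1..l}) (g f : {mpoly int[l]}) : bool :=
  ((lead_cf le g %| lead_cf le f)%Z && (lead_mnm le g <= lead_mnm le f)%MM).

Definition in_ideal (l : nat) (gs : seq {mpoly int[l]}) (f : {mpoly int[l]}) : Prop :=
  exists cs : seq {mpoly int[l]},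
    size cs = size gs /\ f = \sum_(i < size gs) cs`_i * gs`_i.

Definition min_strong_GB (l : nat) (le : rel 'X_{1..l})
    (I : {mpoly int[l]} -> Prop) (G : seq {mpoly int[l]}) : Prop :=
  [/\ (forall g, g \in G -> g != 0 /\ I g),
      (forall f, I f <-> in_ideal G f),
      (forall f, I f -> f != 0 -> exists2 g, g \in G & LM_dvd le g f) &
      (forall i j, (i < size G)%N -> (j < size G)%N -> i != j ->
         ~~ LM_dvd le G`_i G`_j)].

(* p is sigma-lucky for I: p divides none of the leading coefficients *)
(* of a minimal strong Groebner basis (these are independent of the    *)
(* choice of the basis; we quantify over all such bases).             *)
Definition sigma_lucky (l : nat) (le : rel 'X_{1..l}) (I : {mpoly int[l]} -> Prop)
    (p : nat) : Prop :=
  forall G, min_strong_GB le I G -> forall g, g \in G -> ~~ (p%:Z %| lead_cf le g)%Z.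

(* Arrangements: alpha i is the coefficient (row) vector of alpha_i.  *)
Section Arrangement.
Variables (l n : nat) (alpha : 'I_n -> 'rV[int]_l).

Definition lin_form (i : 'I_n) : {mpoly int[l]} :=
  \sum_(j < l) alpha i ord0 j *: 'X_j.

(* H_i = {x in Q^l | alpha_i(x) = 0}, as a subspace of row vectors. *)
Definition hyp (i : 'I_n) : 'M[rat]_l :=
  kermx ((map_mx (fun z : int => z%:~R) (alpha i))^T).

Definition rk (B : {set 'I_n}) : nat :=
  (l - \rank (\bigcap_(i in B) hyp i)%MS)%N.

(* coboundary polynomial, as a polynomial in y with coefficients in Z[x] *)
Definition coboundary : {poly {poly int}} :=
  \sum_(B : {set 'I_n})
     (('X ^+ (rk setT - rk B)%N : {poly int})%:P) * ('X - 1) ^+ #|B|.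

Definition coboundary_at (q : nat) : {poly int} :=
  map_poly (fun c : {poly int} => c.[q%:R]) coboundary.

Definition red (R : nzRingType) (i : 'I_n) : 'rV[R]_l :=
  map_mx (fun z : int => z%:~R) (alpha i).

Definition hcount (F : finFieldType) (P : 'rV[F]_l) : nat :=
  #|[set i : 'I_n | \sum_(j < l) red F i ord0 j * P ord0 j == 0]|.

Definition good_prime (p : nat) : Prop :=
  forall i j : 'I_n, (i < j)%N -> forall c : 'F_p, red 'F_p i != c *: red 'F_p j.

Definition lucky_prime (le : rel 'X_{1..l}) (p : nat) : Prop :=
  forall S : {set 'I_n}, #|S| = l -> rk S = l ->
    sigma_lucky le (in_ideal [seq lin_form i | i <- enum S]) p.

End Arrangement.

(* Main.v *)
Set Warnings "-notation-overridden -ambiguous-paths -notation-incompatible-prefix".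
Require Import Defs.
From HB Require Import structures.
From mathcomp Require Import all_boot all_order all_algebra all_field.
From mathcomp Require Import mpoly.
From mathcomp Require Import mxabelem.
From Stdlib Require Import ClassicalEpsilon.
Set Implicit Arguments. Unset Strict Implicit. Unset Printing Implicit Defensive.
Import Order.TTheory GRing.Theory Num.Theory.
Local Open Scope ring_scope.
Section TermOrder.
Variables (l : nat) (le : rel 'X_{1..l}) (Hle : is_term_order le).

Lemma le_refl m : le m m. Proof. by case: Hle. Qed.
Lemma le_anti m1 m2 : le m1 m2 -> le m2 m1 -> m1 = m2.
Proof. by case: Hle => _ [H _ _ _ _]; apply: H. Qed.
Lemma le_trans m1 m2 m3 : le m1 m2 -> le m2 m3 -> le m1 m3.
Proof. by case: Hle => _ [_ H _ _ _]; apply: H. Qed.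
Lemma le_total m1 m2 : le m1 m2 || le m2 m1.
Proof. by case: Hle => _ [_ _ H _ _]; apply: H. Qed.
Lemma le0 m : le 0%MM m.
Proof. by case: Hle => _ [_ _ _ H _]; apply: H. Qed.
Lemma le_add m1 m2 m : le m1 m2 -> le (m1 + m)%MM (m2 + m)%MM.
Proof. by case: Hle => _ [_ _ _ _ H]; apply: H. Qed.
Lemma le_addl m1 m2 m : le m1 m2 -> le (m + m1)%MM (m + m2)%MM.
Proof. by rewrite ![(m + _)%MM]addmC; apply: le_add. Qed.

Lemma fold_maxP (s : seq 'X_{1..l}) :
  let r := foldr (fun m acc => if le acc m then m else acc) 0%MM s in
  (s = [::] \/ r \in s) /\ forall m, m \in s -> le m r.
Proof.
elim: s => [|x s [IH1 IH2]] /=; first by split; [left|].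
set r := foldr _ _ s in IH1 IH2 *.
case: ifP => hx.
  split; first by right; rewrite inE eqxx.
  move=> m; rewrite inE => /orP [/eqP ->|/IH2 hm]; first exact: le_refl.
  exact: le_trans hm hx.
split.
  right; case: IH1 => [E|h]; last by rewrite inE h orbT.
  by move: hx; rewrite /r E /= le0.
have hx' : le x r by move: (le_total r x); rewrite hx.
by move=> m; rewrite inE => /orP [/eqP ->|/IH2].
Qed.

Lemma lead_mnmP (f : {mpoly int[l]}) : f != 0 ->
  lead_mnm le f \in msupp f /\ forall m, m \in msupp f -> le m (lead_mnm le f).
Proof.
move=> nz; have [[E|h] H] := fold_maxP (msupp f).
  by move/eqP: E; rewrite msupp_eq0 (negbTE nz).
by split.
Qed.

Lemma lead_mnm_le (f : {mpoly int[l]}) m : m \in msupp f -> le m (lead_mnm le f).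
Proof. by have [_ H] := fold_maxP (msupp f); apply: H. Qed.

Lemma lead_mnm_eq (f : {mpoly int[l]}) m : m \in msupp f ->
  (forall m', m' \in msupp f -> le m' m) -> lead_mnm le f = m.
Proof.
move=> hm H; apply: le_anti; last exact: lead_mnm_le.
apply: H; have nz : f != 0 by apply: contraTneq hm => ->; rewrite msupp0.
by case: (lead_mnmP nz).
Qed.

Lemma lead_cf_eq0 (f : {mpoly int[l]}) : (lead_cf le f == 0) = (f == 0).
Proof.
apply/idP/idP; last by move/eqP->; rewrite /lead_cf mcoeff0.
apply: contraLR => nz; rewrite /lead_cf mcoeff_eq0 negbK.
by case: (lead_mnmP nz).
Qed.

Lemma mcoeffMX_gen (f : {mpoly int[l]}) u m :
  (f * 'X_[u])@_m = if (u <= m)%MM then f@_(m - u)%MM else 0.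
Proof.
case: ifP => h.
  by rewrite -{1}(submK h) addmC mcoeffMX.
apply/eqP; rewrite mcoeff_eq0 (perm_mem (msuppMX _ _)).
apply/negP => /mapP [m' _ E]; move: h; rewrite E.
by rewrite lem_addr.
Qed.

Lemma lead_mulX (f : {mpoly int[l]}) u : f != 0 ->
  lead_mnm le (f * 'X_[u]) = (u + lead_mnm le f)%MM /\
  lead_cf le (f * 'X_[u]) = lead_cf le f.
Proof.
move=> nz; have [h1 h2] := lead_mnmP nz.
have E : lead_mnm le (f * 'X_[u]) = (u + lead_mnm le f)%MM.
  apply: lead_mnm_eq.
    by rewrite (perm_mem (msuppMX _ _)); apply: map_f.
  move=> m'; rewrite (perm_mem (msuppMX _ _)) => /mapP [m'' /h2 hm ->].
  exact: le_addl.
by split=> //; rewrite /lead_cf E mcoeffMX.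
Qed.

Lemma nat_min_ex (P : nat -> Prop) : (exists v, P v) ->
  exists v, P v /\ forall w, P w -> (v <= w)%N.
Proof.
move=> [v0 Pv0]; apply: NNPP => H.
suff: forall k w, (w <= k)%N -> ~ P w by move/(_ v0 v0 (leqnn _)).
elim=> [|k IH] w.
  rewrite leqn0 => /eqP -> P0; apply: H; exists 0%N; split => //.
rewrite leq_eqVlt => /orP [/eqP ->|]; last exact: IH.
move=> Pk; apply: H; exists k.+1; split => // w' Pw'.
by rewrite ltnNge; apply/negP => /IH.
Qed.

Lemma nat_subseq (t : nat -> nat) : exists psi : nat -> nat,
  (forall i, (psi i < psi i.+1)%N) /\ (forall i, (t (psi i) <= t (psi i.+1))%N).
Proof.
have minex : forall a, exists b, (a < b)%N /\ forall c, (a < c)%N -> (t b <= t c)%N.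
  move=> a; have [v [[c [hc <-]] hv]] :=
    nat_min_ex (P := fun v => exists c, (a < c)%N /\ t c = v)
      (ex_intro _ (t a.+1) (ex_intro _ a.+1 (conj (ltnSn a) erefl))).
  exists c; split => // c' hc'; apply: hv; by exists c'.
pose nxt a := proj1_sig (constructive_indefinite_description _ (minex a)).
have nxtP a : (a < nxt a)%N /\ forall c, (a < c)%N -> (t (nxt a) <= t c)%N.
  exact: proj2_sig (constructive_indefinite_description _ (minex a)).
exists (fun i => iter i.+1 nxt 0%N); split => i.
  by rewrite [iter i.+2 _ _]iterS; case: (nxtP (iter i.+1 nxt 0%N)).
rewrite [iter i.+1 _ _]iterS [iter i.+2 _ _]iterS.
have [h1 h2] := nxtP (iter i nxt 0%N).
apply: h2; apply: ltn_trans h1 _.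
by case: (nxtP (nxt (iter i nxt 0%N))).
Qed.

Lemma dickson_sub (s : nat -> 'X_{1..l}) : exists phi : nat -> nat,
  (forall i, (phi i < phi i.+1)%N) /\ (forall i, (s (phi i) <= s (phi i.+1))%MM).
Proof.
suff H : forall k, (k <= l)%N -> exists phi : nat -> nat,
  (forall i, (phi i < phi i.+1)%N) /\
  (forall i (c : 'I_l), (c < k)%N -> (s (phi i) c <= s (phi i.+1) c)%N).
  have [phi [h1 h2]] := H l (leqnn l); exists phi; split => // i.
  by apply/mnm_lepP => c; apply: h2.
elim=> [|k IH] hk.
  by exists id; split.
have [phi [h1 h2]] := IH (ltnW hk).
pose c0 : 'I_l := Ordinal hk.
have [psi [g1 g2]] := nat_subseq (fun i => s (phi i) c0).
exists (fun i => phi (psi i)); split => [i|i c hc].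
  exact: (homo_ltn (@ltn_trans) h1 (g1 i)).
rewrite ltnS leq_eqVlt in hc; case/orP: hc => [/eqP hc|hc].
  by have -> : c = c0 by apply: val_inj.
apply: (homo_leq (f := fun j => s (phi j) c) (r := fun a b => (a <= b)%N)) => //.
- exact: leq_trans.
- by move=> j; apply: h2.
- exact: ltnW.
Qed.

Lemma le_wf_ind (P : 'X_{1..l} -> Prop) :
  (forall m, (forall m', le m' m -> m' != m -> P m') -> P m) -> forall m, P m.
Proof.
move=> H m0; apply: NNPP => nP0.
have step : forall x : {m | ~ P m}, exists y : {m | ~ P m},
    le (proj1_sig y) (proj1_sig x) /\ proj1_sig y != proj1_sig x.
  case=> m nPm /=; apply: NNPP => hn; apply: nPm; apply: H => m' h1 h2.
  apply: NNPP => nPm'; apply: hn; by exists (exist _ m' nPm').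
pose nxt x := proj1_sig (constructive_indefinite_description _ (step x)).
have nxtP x : le (proj1_sig (nxt x)) (proj1_sig x) /\ proj1_sig (nxt x) != proj1_sig x.
  exact: proj2_sig (constructive_indefinite_description _ (step x)).
pose s i := proj1_sig (iter i nxt (exist _ m0 nP0)).
have sS i : le (s i.+1) (s i) /\ s i.+1 != s i.
  by rewrite /s iterS; apply: nxtP.
have chain : forall i k, le (s (i + k.+1)%N) (s i) /\ s (i + k.+1)%N != s i.
  move=> i; elim=> [|k [IH1 IH2]]; first by rewrite addn1; apply: sS.
  rewrite addnS; have [a1 a2] := sS (i + k.+1)%N.
  split; first exact: le_trans a1 IH1.
  apply/eqP => E; move: a2; rewrite E => /eqP; apply.
  by apply: le_anti => //; rewrite -E.
have [phi [h1 h2]] := dickson_sub s.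
have [c1 c2] := chain (phi 0%N) (phi 1%N - phi 0%N).-1.
have E : (phi 0%N + (phi 1%N - phi 0%N).-1.+1)%N = phi 1%N.
  by rewrite prednK ?subn_gt0 ?h1 // subnKC // ltnW.
rewrite E in c1 c2.
move/eqP: c2; apply; apply: le_anti => //.
rewrite -(submK (h2 0%N)) -{1}[s (phi 0%N)]add0m.
exact: le_add (le0 _).
Qed.

End TermOrder.

Section Ideal.
Variables (l : nat) (gs : seq {mpoly int[l]}).
Implicit Types f g : {mpoly int[l]}.

Lemma in_idealP f : in_ideal gs f <->
  exists c : nat -> {mpoly int[l]}, f = \sum_(i < size gs) c i * gs`_i.
Proof.
split=> [[cs [_ ->]]|[c ->]]; first by exists (nth 0 cs).
exists (mkseq c (size gs)); rewrite size_mkseq; split=> //.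
by apply: eq_bigr => i _; rewrite nth_mkseq.
Qed.

Lemma in_ideal0 : in_ideal gs 0.
Proof. by apply/in_idealP; exists (fun _ => 0); rewrite big1 // => i _; rewrite mul0r. Qed.

Lemma in_idealD f g : in_ideal gs f -> in_ideal gs g -> in_ideal gs (f + g).
Proof.
move=> /in_idealP [c1 ->] /in_idealP [c2 ->]; apply/in_idealP.
by exists (fun i => c1 i + c2 i); rewrite -big_split; apply: eq_bigr => i _; rewrite mulrDl.
Qed.

Lemma in_idealM h f : in_ideal gs f -> in_ideal gs (h * f).
Proof.
move=> /in_idealP [c ->]; apply/in_idealP; exists (fun i => h * c i).
by rewrite mulr_sumr; apply: eq_bigr => i _; rewrite mulrA.
Qed.

Lemma in_idealN f : in_ideal gs f -> in_ideal gs (- f).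
Proof. by move=> H; rewrite -mulN1r; apply: in_idealM. Qed.

Lemma in_idealB f g : in_ideal gs f -> in_ideal gs g -> in_ideal gs (f - g).
Proof. by move=> Hf Hg; apply: in_idealD => //; apply: in_idealN. Qed.

Lemma in_idealZ a f : in_ideal gs f -> in_ideal gs (a *: f).
Proof. by move=> H; rewrite -mul_mpolyC; apply: in_idealM. Qed.

Lemma in_ideal_gen g : g \in gs -> in_ideal gs g.
Proof.
move=> hg; apply/in_idealP; pose k := index g gs.
have hk : (k < size gs)%N by rewrite index_mem.
exists (fun i => if i == k then 1 else 0).
rewrite (bigD1 (Ordinal hk)) //= eqxx mul1r nth_index // big1 ?addr0 //.
move=> i /negbTE hi; case: eqP => [E|]; last by rewrite mul0r.
have Ei : i = Ordinal hk by apply: val_inj; exact: E.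
by move: hi; rewrite Ei eqxx.
Qed.

End Ideal.

Lemma in_ideal_sub l (gs hs : seq {mpoly int[l]}) :
  (forall g, g \in hs -> in_ideal gs g) -> forall f, in_ideal hs f -> in_ideal gs f.
Proof.
move=> H f /(in_idealP hs) [c ->].
elim/big_ind: _ => [|x y|i _]; [exact: in_ideal0|exact: in_idealD|].
by apply: in_idealM; apply: H; apply: mem_nth.
Qed.


Definition pb (P : Prop) : bool := if excluded_middle_informative P then true else false.
Lemma pbP (P : Prop) : reflect P (pb P).
Proof. by rewrite /pb; case: excluded_middle_informative => h; constructor. Qed.

Section GB.
Variables (l : nat) (le : rel 'X_{1..l}) (Hle : is_term_order le) (gs : seq {mpoly int[l]}).
Local Notation I := (in_ideal gs).

Definition Tc (c : int) (m : 'X_{1..l}) :=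
  exists f, I f /\ f != 0 /\ lead_mnm le f = m /\ lead_cf le f = c.
Definition Mn (c : int) (m : 'X_{1..l}) :=
  Tc c m /\ forall c' m', Tc c' m' -> (c' %| c)%Z -> (m' <= m)%MM -> m' = m /\ (c %| c')%Z.

Lemma Tc_neq0 c m : Tc c m -> c != 0.
Proof. by case=> f [_ [nz [_ <-]]]; rewrite (lead_cf_eq0 Hle). Qed.

Lemma Tc_shift c m u : Tc c m -> Tc c (u + m)%MM.
Proof.
case=> f [If [nz [<- <-]]]; exists (f * 'X_[u]).
have [h1 h2] := lead_mulX Hle u nz.
split; first by rewrite mulrC; apply: in_idealM.
split; last by [].
by rewrite -(lead_cf_eq0 Hle) h2 (lead_cf_eq0 Hle).
Qed.

Lemma abs_dvd_lt (a b : int) : b != 0 -> (a %| b)%Z -> ~~ (b %| a)%Z -> (`|a| < `|b|)%N.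
Proof.
move=> nzb; rewrite !dvdzE => hab hba.
have hb : (0 < `|b|)%N by rewrite absz_gt0.
rewrite ltn_neqAle dvdn_leq // andbT; apply: contraNneq hba => ->; exact: dvdnn.
Qed.

Lemma abs_dvd_le (a b : int) : b != 0 -> (a %| b)%Z -> (`|a| <= `|b|)%N.
Proof. by move=> nzb; rewrite dvdzE => h; apply: dvdn_leq => //; rewrite absz_gt0. Qed.

Lemma Mn_dvd c m c' : Mn c m -> Tc c' m -> (c %| c')%Z.
Proof.
case=> [[f [If [nzf [lf cf]]]] Hmin] [f' [If' [nzf' [lf' cf']]]].
have [u [v Euv]] := Bezoutz c c'.
pose h := u *: f + v *: f'.
have hm : h@_m = gcdz c c'.
  by rewrite /h mcoeffD !mcoeffZ -Euv -cf -cf' /lead_cf lf lf'.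
have nzc : c != 0 by rewrite -cf (lead_cf_eq0 Hle).
have nzg : gcdz c c' != 0 by rewrite gcdz_eq0 negb_and nzc.
have msm : m \in msupp h by rewrite mcoeff_msupp hm.
have lh : lead_mnm le h = m.
  apply: (lead_mnm_eq Hle) => // m' /msuppD_le; rewrite mem_cat => /orP [] /msuppZ_le hm'.
    by rewrite -lf; apply: (lead_mnm_le Hle).
  by rewrite -lf'; apply: (lead_mnm_le Hle).
have T : Tc (gcdz c c') m.
  exists h; split; first by apply: in_idealD; apply: in_idealZ.
  split; first by apply: contraTneq msm => ->; rewrite msupp0.
  by split=> //; rewrite /lead_cf lh.
have [_ hd] := Hmin _ _ T (dvdz_gcdl _ _) (lepm_refl _).
exact: dvdz_trans hd (dvdz_gcdr _ _).
Qed.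

Lemma descent c m : Tc c m -> exists c' m', Mn c' m' /\ (c' %| c)%Z /\ (m' <= m)%MM.
Proof.
suff H : forall N c m, (`|c| + mdeg m <= N)%N -> Tc c m ->
  exists c' m', Mn c' m' /\ (c' %| c)%Z /\ (m' <= m)%MM by apply: H (leqnn _).
elim=> [|N IH] {}c {}m hN hT.
  have nzc := Tc_neq0 hT.
  by move: hN; rewrite leqn0 addn_eq0 absz_eq0 (negbTE nzc).
case: (classic (Mn c m)) => hM.
  by exists c, m; split=> //; split; [apply: dvdzz|apply: lepm_refl].
have : exists c' m', Tc c' m' /\ (c' %| c)%Z /\ (m' <= m)%MM /\ ~ (m' = m /\ (c %| c')%Z).
  apply: NNPP => hn; apply: hM; split=> // c' m' h1 h2 h3.
  by apply: NNPP => h4; apply: hn; exists c', m'.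
case=> c' [m' [h1 [h2 [h3 h4]]]].
have nzc := Tc_neq0 hT.
have lt : (`|c'| + mdeg m' < `|c| + mdeg m)%N.
  case: (eqVneq m' m) => [E|ne].
    subst m'; rewrite ltn_add2r; apply: abs_dvd_lt => //.
    by apply/negP => h; apply: h4.
  apply: leq_trans (leq_add (abs_dvd_le nzc h2) (leqnn _)).
  rewrite ltn_add2l -(submK h3) mdegD -[X in (X < _)%N]add0n ltn_add2r lt0n.
  by rewrite mdeg_eq0; apply: contra_neq ne => E; rewrite -(submK h3) E add0m.
have [c'' [m'' [k1 [k2 k3]]]] := IH c' m' (leq_trans (leq_trans lt hN) (leqnn _)) h1.
exists c'', m''; split=> //; split; first exact: dvdz_trans k2 h2.
exact: lepm_trans k3 h3.
Qed.

Lemma Mn_strict c1 m1 c2 m2 : Mn c1 m1 -> Mn c2 m2 -> (m1 <= m2)%MM -> m1 != m2 ->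
  (`|c2| < `|c1|)%N.
Proof.
move=> M1 M2 hle hne.
have T : Tc c1 m2 by rewrite -(submK hle); apply: Tc_shift; case: M1.
have d21 := Mn_dvd M2 T.
have nz1 : c1 != 0 by case: M1 => T1 _; exact: Tc_neq0 T1.
apply: (abs_dvd_lt nz1 d21).
apply/negP => d12; case: M2 => _ /(_ c1 m1) [] //; first by case: M1.
by move=> E; move: hne; rewrite E eqxx.
Qed.

Lemma Mn_bound : exists N, forall c m, Mn c m -> (mdeg m < N)%N.
Proof.
apply: NNPP => hB.
have H : forall N, exists p : int * 'X_{1..l}, Mn p.1 p.2 /\ (N <= mdeg p.2)%N.
  move=> N; apply: NNPP => hn; apply: hB; exists N => c m hM.
  rewrite ltnNge; apply/negP => hd; apply: hn; by exists (c, m).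
pose g N := proj1_sig (constructive_indefinite_description _ (H N)).
have gP N : Mn (g N).1 (g N).2 /\ (N <= mdeg (g N).2)%N.
  exact: proj2_sig (constructive_indefinite_description _ (H N)).
pose x i := iter i (fun p => g (mdeg p.2).+1) (g 0%N).
have xM i : Mn (x i).1 (x i).2 by case: i => [|i]; rewrite /x ?iterS; apply: (proj1 (gP _)).
have xlt i : (mdeg (x i).2 < mdeg (x i.+1).2)%N by rewrite /x iterS; apply: (proj2 (gP _)).
have [phi [h1 h2]] := dickson_sub (fun i => (x i).2).
have dec i : (`|(x (phi i.+1)).1| < `|(x (phi i)).1|)%N.
  apply: Mn_strict (xM _) (xM _) (h2 i) _.
  have := homo_ltn (f := fun i => mdeg (x i).2) (r := fun a b => (a < b)%N)
    (@ltn_trans) xlt (h1 i).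
  by apply: contraTneq => ->; rewrite ltnn.
have bnd i : (`|(x (phi i)).1| + i <= `|(x (phi 0%N)).1|)%N.
  elim: i => [|i IH]; first by rewrite addn0.
  by rewrite addnS; apply: leq_trans IH; rewrite ltn_add2r.
by have := bnd (`|(x (phi 0%N)).1|.+1); rewrite addnS ltnNge leq_addl.
Qed.


Lemma GB_exists : exists G, min_strong_GB le I G.
Proof.
have [N HN] := Mn_bound.
pose ms := [seq val b | b <- enum (fun b : 'X_{1..l < N} => pb (exists c, Mn c (val b)))].
have msP m : (m \in ms) <-> exists c, Mn c m.
  split.
    by case/mapP => b; rewrite mem_enum => /pbP h ->.
  move=> [c hM]; apply/mapP; exists (BMultinom (HN _ _ hM)) => //.
  by rewrite mem_enum; apply/pbP; exists c.
have ms_uniq : uniq ms.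
  by rewrite map_inj_uniq ?enum_uniq //; apply: val_inj.
pose Pf m f := Mn (lead_cf le f) m /\ I f /\ f != 0 /\ lead_mnm le f = m.
pose pickf m := match excluded_middle_informative (exists f, Pf m f) with
  | left h => proj1_sig (constructive_indefinite_description _ h)
  | right _ => 0 end.
have pickP m c : Mn c m -> Pf m (pickf m).
  move=> hM; rewrite /pickf; case: excluded_middle_informative => [h|hn].
    exact: proj2_sig (constructive_indefinite_description _ h).
  exfalso; apply: hn; case: (hM) => [[f [If [nz [lf cf]]]] _].
  by exists f; rewrite /Pf cf.
pose G := map pickf ms.
have C1 g : g \in G -> Pf (lead_mnm le g) g.
  case/mapP => m /msP [c hM] ->; have P := pickP _ _ hM.
  by case: (P) => _ [_ [_ ->]].
have C3 f : I f -> f != 0 -> exists2 g, g \in G & LM_dvd le g f.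
  move=> If nz.
  have T : Tc (lead_cf le f) (lead_mnm le f) by exists f.
  have [c' [m' [hM [hd hm]]]] := descent T.
  exists (pickf m'); first by apply: map_f; apply/msP; exists c'.
  have [P1 [_ [_ P4]]] := pickP _ _ hM.
  rewrite /LM_dvd P4 hm andbT.
  apply: dvdz_trans hd; apply: Mn_dvd P1 _; by case: hM.
exists G; split.
- by move=> g /C1 [_ [Ig [nz _]]].
- move=> f; split; last first.
    by apply: in_ideal_sub => g /C1 [_ [Ig _]].
  move=> If; case: (eqVneq f 0) => [->|nz]; first exact: in_ideal0.
  move: If nz; move E : (lead_mnm le f) => m; elim/(le_wf_ind Hle): m f E.
  move=> m IH f lf If nz.
  have [g gG /andP [dc dm]] := C3 f If nz.
  have [_ [Ig [nzg _]]] := C1 g gG.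
  case/dvdzP: dc => a Ea.
  pose u := (lead_mnm le f - lead_mnm le g)%MM.
  have Eu : (u + lead_mnm le g)%MM = lead_mnm le f by rewrite /u submK.
  have [lg1 lg2] := lead_mulX Hle u nzg.
  pose h := a *: (g * 'X_[u]).
  have Ih : in_ideal G h.
    rewrite /h -mul_mpolyC [g * _]mulrC mulrA; apply: in_idealM; exact: in_ideal_gen.
  have Ih' : I h.
    rewrite /h -mul_mpolyC [g * _]mulrC mulrA; exact: in_idealM.
  pose f' := f - h.
  have -> : f = f' + h by rewrite /f' subrK.
  apply: in_idealD Ih.
  case: (eqVneq f' 0) => [->|nz']; first exact: in_ideal0.
  apply: (IH (lead_mnm le f')) => //; last exact: in_idealB.
    have [hin _] := lead_mnmP Hle nz'.
    move: hin; move: (lead_mnm le f') => m0 /msuppB_le.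
    rewrite mem_cat => /orP [|/msuppZ_le]; first by rewrite -lf; apply: (lead_mnm_le Hle).
    rewrite -lf -Eu -lg1 => hm0; exact: (lead_mnm_le Hle).
  have [hin _] := lead_mnmP Hle nz'.
  apply: contraTneq hin => ->.
  rewrite mcoeff_msupp negbK /f' mcoeffB /h mcoeffZ -lf -Eu mcoeffMX.
  by rewrite Eu -/(lead_cf le f) Ea /lead_cf mulrC subrr.
- exact: C3.
- move=> i j hi hj hij; rewrite /G size_map in hi hj; rewrite !(nth_map 0%MM) //.
  have [c1 M1] : exists c, Mn c (nth 0%MM ms i) by apply/msP; apply: mem_nth.
  have [c2 M2] : exists c, Mn c (nth 0%MM ms j) by apply/msP; apply: mem_nth.
  have [P1 [_ [_ P4]]] := pickP _ _ M1.
  have [Q1 [_ [_ Q4]]] := pickP _ _ M2.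
  apply/negP => /andP [d1 d2]; rewrite P4 Q4 in d2.
  have T1 : Tc (lead_cf le (pickf (nth 0%MM ms i))) (nth 0%MM ms i) by case: P1.
  case: Q1 => _ /(_ _ _ T1 d1 d2) [E _].
  by move: hij; rewrite -(nth_uniq 0%MM hi hj ms_uniq) E eqxx.
Qed.

End GB.

Section Arr.
Variables (l n : nat) (alpha : 'I_n -> 'rV[int]_l).

Lemma U_le0 (k : 'I_l) : (U_(k) <= (0 : 'X_{1..l}))%MM = false.
Proof. by rewrite lep1mP mnm0E eqxx. Qed.

Lemma U_leU (j k : 'I_l) : (U_(j) <= U_(k))%MM = (j == k).
Proof. by rewrite lep1mP mnm1E [k == j]eq_sym; case: (j == k). Qed.

Lemma lin_form_coef0 (c : {mpoly int[l]}) i : (c * lin_form alpha i)@_0%MM = 0.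
Proof.
rewrite /lin_form mulr_sumr raddf_sum big1 // => j _ /=.
by rewrite -scalerAr mcoeffZ mcoeffMX_gen U_le0 mulr0.
Qed.

Lemma lin_form_coefU (c : {mpoly int[l]}) i k :
  (c * lin_form alpha i)@_U_(k) = c@_0%MM * alpha i 0 k.
Proof.
rewrite /lin_form mulr_sumr raddf_sum (bigD1 k) //= big1 ?addr0 /=.
  rewrite -scalerAr mcoeffZ mcoeffMX_gen U_leU eqxx mulrC.
  by congr (_ * _); congr (c@_ _); apply/mnmP => x; rewrite mnmBE subnn mnm0E.
move=> j /negbTE hj /=.
by rewrite -scalerAr mcoeffZ mcoeffMX_gen U_leU hj mulr0.
Qed.

End Arr.

Lemma fchoice (A : finType) (T : Type) (P : A -> T -> Prop) :
  (forall a, exists x, P a x) -> exists f : A -> T, forall a, P a (f a).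
Proof.
move=> H; exists (fun a => proj1_sig (constructive_indefinite_description _ (H a))).
move=> a; exact: proj2_sig (constructive_indefinite_description _ (H a)).
Qed.

Lemma triangular_free (l : nat) (le : rel 'X_{1..l}) (Hle : is_term_order le)
  (F : fieldType) (T : 'M[F]_l) :
  (forall j, T j j != 0) -> (forall j k, le U_(j)%MM U_(k)%MM -> k != j -> T j k = 0) ->
  row_free T.
Proof.
move=> Hd Ht; apply: inj_row_free => v hv.
apply/rowP => x; rewrite mxE; apply/eqP; apply: contraT => hx.
pose J := [seq j <- enum 'I_l | v 0 j != 0].
have xJ : x \in J by rewrite mem_filter hx mem_enum.
have [[E|rin] rmax] := fold_maxP Hle [seq U_(j)%MM | j <- J].
  by move: E; case: (J) xJ.
set r := foldr _ _ _ in rin rmax.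
case/mapP: rin => j0 j0J Er.
have := congr1 (fun M : 'rV[F]_l => M 0 j0) hv; rewrite !mxE (bigD1 j0) //= big1.
  rewrite addr0 => /eqP; rewrite mulf_eq0 (negbTE (Hd j0)) orbF.
  by move: j0J; rewrite mem_filter => /andP [/negbTE ->].
move=> j hj; case: (eqVneq (v 0 j) 0) => [->|nz]; first by rewrite mul0r.
have hle : le U_(j)%MM U_(j0)%MM.
  by rewrite -Er; apply: rmax; apply: map_f; rewrite mem_filter nz mem_enum.
by rewrite (Ht j j0 hle) ?mulr0 // eq_sym.
Qed.

Section Key.
Variables (l n : nat) (alpha : 'I_n -> 'rV[int]_l).

Definition Zm (K : fieldType) (B : {set 'I_n}) : 'M[K]_(n, l) :=
  \matrix_(i, j) if i \in B then (alpha i 0 j)%:~R else 0.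


Local Notation intr := (fun z : int => z%:~R).

Lemma key_rank (le : rel 'X_{1..l}) (Hle : is_term_order le) (p : nat)
  (F : fieldType) (Hchar : forall c : int, (c%:~R == 0 :> F) = (p%:Z %| c)%Z)
  (S : {set 'I_n}) (HS : #|S| = l)
  (Hl : sigma_lucky le (in_ideal [seq lin_form alpha i | i <- enum S]) p)
  (Hr : \rank (Zm rat S) = l) : \rank (Zm F S) = l.
Proof.
apply/eqP; rewrite eqn_leq rank_leq_col /=.
case: (posnP l) => [l0|lpos]; first by rewrite {1}l0.
have [i0 i0S] : exists i0, i0 \in S by apply/set0Pn; rewrite -card_gt0 HS.
set gsS := [seq lin_form alpha i | i <- enum S].
have szS : size gsS = l by rewrite size_map -cardE HS.
pose sv (a : nat) := nth i0 (enum S) a.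
have gsE a : (a < l)%N -> gsS`_a = lin_form alpha (sv a).
  by move=> ha; rewrite (nth_map i0) // -cardE HS.
have svS a : (a < l)%N -> sv a \in S.
  by move=> ha; rewrite -mem_enum mem_nth // -cardE HS.
pose M : 'M[int]_l := \matrix_(a, j) alpha (sv a) ord0 j.
have rkE (K : fieldType) : \rank (Zm K S) = \rank (map_mx (fun z : int => (z%:~R : K)) M).
  apply: eqmx_rank; apply/andP; split; apply/row_subP => i.
    case: (boolP (i \in S)) => iS; last first.
      rewrite (_ : row i _ = 0) ?sub0mx //; apply/rowP => j.
      by rewrite !mxE (negbTE iS).
    have ha : (index i (enum S) < l)%N by rewrite -HS cardE index_mem mem_enum.
    rewrite (_ : row i _ = row (Ordinal ha) (map_mx (fun z : int => (z%:~R : K)) M)) ?row_sub //.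
    apply/rowP => j; rewrite !mxE iS /sv /= nth_index //.
    by rewrite mem_enum.
  rewrite (_ : row i _ = row (sv i) (Zm K S)) ?row_sub //.
  by apply/rowP => j; rewrite !mxE svS.
have detM : \det M != 0.
  have : (map_mx (fun z : int => (z%:~R : rat)) M) \in unitmx.
    by rewrite -row_free_unit /row_free -rkE Hr.
  rewrite unitmxE unitfE det_map_mx; apply: contra_neq => ->.
  by [].
have Wex : forall j : 'I_l, exists w : 'rV[int]_l,
    ~~ (p%:Z %| (w *m M) ord0 j)%Z /\
    forall k, le U_(j)%MM U_(k)%MM -> k != j -> (w *m M) ord0 k = 0.
  move=> j.
  pose fj : {mpoly int[l]} := \det M *: 'X_j.
  have Ifj : in_ideal gsS fj.
    apply/in_idealP; exists (fun a => ((\adj M) j (insubd j a))%:MP).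
    rewrite szS.
    transitivity (\sum_(a < l) ((\adj M) j a)%:MP * lin_form alpha (sv a)); last first.
      apply: eq_bigr => a _; rewrite gsE //.
      by congr (_%:MP * _); congr (_ _ _); apply: val_inj; rewrite val_insubd ltn_ord.
    rewrite /lin_form.
    under eq_bigr => a _ do rewrite mul_mpolyC scaler_sumr.
    rewrite exchange_big /= (bigD1 j) //= [X in _ + X]big1 ?addr0.
      rewrite /fj; under eq_bigr => a _ do rewrite scalerA.
      rewrite -scaler_suml; congr (_ *: _).
      have := congr1 (fun A : 'M[int]_l => A j j) (mul_adj_mx M).
      rewrite !mxE eqxx mulr1n => <-.
      by apply: eq_bigr => a _; rewrite [M a j]mxE.
    move=> k hk; under eq_bigr => a _ do rewrite scalerA.
    rewrite -scaler_suml.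
    have := congr1 (fun A : 'M[int]_l => A j k) (mul_adj_mx M).
    rewrite !mxE eq_sym (negbTE hk) mulr0n => E.
    rewrite (_ : \sum_(i < l) _ = 0) ?scale0r //; rewrite -[RHS]E.
    by apply: eq_bigr => a _; rewrite [M a k]mxE.
  have msf : msupp fj = [:: U_(j)%MM] by rewrite msuppMCX.
  have nzfj : fj != 0 by rewrite -msupp_eq0 msf.
  have lfj : lead_mnm le fj = U_(j)%MM.
    by apply: (lead_mnm_eq Hle); rewrite msf ?inE // => m'; rewrite inE => /eqP ->; apply: le_refl.
  have [G HG] := GB_exists Hle gsS.
  have HG' := HG; case: HG' => [C1 C2 C3 C4].
  have [g gG /andP [_ hm]] := C3 fj Ifj nzfj.
  have [nzg Ig] := C1 g gG.
  have np := Hl G HG g gG.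
  rewrite lfj in hm.
  case/in_idealP: (Ig) => c Eg.
  have gcoef m : g@_m = \sum_(a < l) (c a * lin_form alpha (sv a))@_m.
    rewrite Eg szS raddf_sum /=; apply: eq_bigr => a _; by rewrite gsE ?ltn_ord.
  have g0 : g@_0%MM = 0 by rewrite gcoef big1 // => a _; rewrite lin_form_coef0.
  have lg : lead_mnm le g = U_(j)%MM.
    have [lin _] := lead_mnmP Hle nzg.
    have H k : (lead_mnm le g k <= (j == k))%N.
      by have := mnm_lepP hm k; rewrite mnm1E.
    case: (pickP (fun k0 => lead_mnm le g k0 != 0%N)) => [k0 hk0|hall]; last first.
      have E : lead_mnm le g = 0%MM.
        by apply/mnmP => k; rewrite mnm0E; move: (hall k) => /= /negbFE /eqP.
      by move: lin; rewrite E mcoeff_msupp g0 eqxx.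
    have jk0 : j == k0 by move: (H k0) hk0; case: (j == k0) => //=; rewrite leqn0 => ->.
    move/eqP: jk0 => jk0; subst k0.
    apply/mnmP => k; rewrite mnm1E.
    case: (eqVneq j k) => [<-|ne].
      by move: (H j) hk0; rewrite eqxx /=; case: (lead_mnm le g j) => [|[]].
    by move: (H k); rewrite (negbTE ne) /= leqn0 => /eqP ->.
  pose w : 'rV[int]_l := \row_a (c a)@_0%MM.
  have wM k : (w *m M) ord0 k = g@_U_(k)%MM.
    by rewrite gcoef !mxE; apply: eq_bigr => a _; rewrite !mxE lin_form_coefU.
  exists w; split.
    by rewrite wM -lg; exact: np.
  move=> k hle hk; rewrite wM; apply/eqP; rewrite mcoeff_eq0; apply/negP => hin.
  have := lead_mnm_le Hle hin; rewrite lg => h2.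
  have E : U_(k)%MM = U_(j)%MM := le_anti Hle h2 hle.
  by move/eqP: E; rewrite eq_mnm1 (negbTE hk).
have [W HW] := fchoice Wex.
pose W' : 'M[int]_l := \matrix_(j, a) W j ord0 a.
pose T : 'M[F]_l := map_mx (fun z : int => (z%:~R : F)) (W' *m M).
have TE j k : T j k = ((W j *m M) ord0 k)%:~R.
  by rewrite !mxE; congr (_%:~R); apply: eq_bigr => a _; rewrite !mxE.
have fT : row_free T.
  apply: (triangular_free Hle) => [j|j k hle hk]; rewrite TE.
    by rewrite Hchar; case: (HW j).
  by case: (HW j) => _ ->.
have rT : \rank T = l := eqP fT.
rewrite rkE -{1}rT /T map_mxM; exact: mxrankM_maxr.
Qed.
End Key.

From mathcomp Require Import zify.
Section LinAlg.
Variables (l n : nat) (alpha : 'I_n -> 'rV[int]_l) (K : fieldType).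
Local Notation Z := (Zm alpha K).

Definition indep (B : {set 'I_n}) := \rank (Z B) == #|B|.

Lemma rowZ (B : {set 'I_n}) i : row i (Z B) = if i \in B then row i (Z setT) else 0.
Proof. by apply/rowP => j; case: ifP => h; rewrite !mxE ?inE ?h. Qed.

Lemma Z_sub (B C : {set 'I_n}) : B \subset C -> (Z B <= Z C)%MS.
Proof.
move=> sBC; apply/row_subP => i; rewrite rowZ; case: ifP => h; last exact: sub0mx.
by rewrite (_ : row i (Z setT) = row i (Z C)) ?row_sub // [RHS]rowZ (subsetP sBC i h).
Qed.

Lemma Z_add1 (B : {set 'I_n}) i : (Z (i |: B) <= Z B + row i (Z setT))%MS.
Proof.
apply/row_subP => x; rewrite rowZ in_setU1.
case: (eqVneq x i) => [->|ne] /=; first exact: addsmxSr.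
case: ifP => h; last exact: sub0mx.
apply: submx_trans (addsmxSl _ _).
by rewrite (_ : row x (Z setT) = row x (Z B)) ?row_sub // [RHS]rowZ h.
Qed.

Lemma rank_add1 (B : {set 'I_n}) i : (\rank (Z (i |: B)) <= (\rank (Z B)).+1)%N.
Proof.
apply: leq_trans (mxrankS (Z_add1 B i)) _.
apply: leq_trans (mxrank_adds_leqif _ _) _.
by rewrite -[(\rank (Z B)).+1]addn1 leq_add2l rank_leq_row.
Qed.

Lemma rank_add1_strict (B : {set 'I_n}) i : ~~ (row i (Z setT) <= Z B)%MS ->
  \rank (Z (i |: B)) = (\rank (Z B)).+1.
Proof.
move=> nsub; apply/eqP; rewrite eqn_leq rank_add1 /=.
have sB : (Z B <= Z (i |: B))%MS by apply: Z_sub; apply: subsetUr.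
have := mxrank_leqif_sup sB; case => h1 h2.
rewrite ltn_neqAle h1 andbT h2; apply: contra nsub => h.
apply: submx_trans h.
by rewrite (_ : row i (Z setT) = row i (Z (i |: B))) ?row_sub // [RHS]rowZ setU11.
Qed.

Lemma rank_le_card (U D : {set 'I_n}) : (\rank (Z (U :|: D)) <= \rank (Z U) + #|D|)%N.
Proof.
have [k hD] : exists k, #|D| = k by eexists.
rewrite hD; elim: k D hD => [|k IH] D hD.
  move/eqP: hD; rewrite cards_eq0 => /eqP ->; by rewrite setU0 addn0.
have [i iD] : exists i, i \in D by apply/set0Pn; rewrite -card_gt0 hD.
have hD' : #|D :\ i| = k by move: hD; rewrite (cardsD1 i D) iD add1n => [[]].
have -> : U :|: D = i |: (U :|: D :\ i).
  by rewrite setUCA setD1K.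
apply: leq_trans (rank_add1 _ _) _.
by rewrite addnS ltnS IH.
Qed.

Lemma rank_le_card0 (D : {set 'I_n}) : (\rank (Z D) <= #|D|)%N.
Proof.
have := rank_le_card set0 D; rewrite set0U => /leq_trans; apply.
have -> : Z set0 = 0 by apply/matrixP => i j; rewrite !mxE inE.
by rewrite mxrank0.
Qed.

Lemma indep_sub (T T' : {set 'I_n}) : T' \subset T -> indep T -> indep T'.
Proof.
move=> sT /eqP hT; rewrite /indep eqn_leq rank_le_card0 /=.
have E : T' :|: T :\: T' = T.
  by apply/setP => x; rewrite !inE; case: (boolP (x \in T')) => //= /(subsetP sT) ->.
have := rank_le_card T' (T :\: T'); rewrite E hT (cardsDS sT).
move=> h2; have h1 := subset_leq_card sT.
by rewrite -(leq_add2r (#|T| - #|T'|)) subnKC.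
Qed.

Lemma indep0 : indep set0.
Proof.
rewrite /indep cards0 (_ : Z set0 = 0) ?mxrank0 //.
by apply/matrixP => i j; rewrite !mxE inE.
Qed.

Lemma extend (B0 C : {set 'I_n}) : B0 \subset C -> indep B0 ->
  exists T : {set 'I_n}, [/\ B0 \subset T, T \subset C, indep T & \rank (Z T) = \rank (Z C)].
Proof.
move=> sB0 iB0.
pose P (T : {set 'I_n}) := [&& B0 \subset T, T \subset C & indep T].
have PB0 : P B0 by rewrite /P subxx sB0 iB0.
case: (arg_maxnP (fun T : {set 'I_n} => #|T|) PB0) => T /and3P [h1 h2 h3] hmax.
exists T; split=> //.
apply/eqP; rewrite eqn_leq mxrankS ?Z_sub //=.
apply: mxrankS; apply/row_subP => i; rewrite rowZ; case: ifP => iC; last exact: sub0mx.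
case: (boolP (i \in T)) => iT.
  by rewrite (_ : row i (Z setT) = row i (Z T)) ?row_sub // [RHS]rowZ iT.
apply: contraT => ns.
have r1 := rank_add1_strict ns.
have PT' : P (i |: T).
  rewrite /P (subset_trans h1 (subsetUr _ _)) /= subUset sub1set iC h2 /=.
  by rewrite /indep r1 cardsU1 iT (eqP h3).
have := hmax _ PT'; rewrite cardsU1 iT /=.
by rewrite add1n ltnn.
Qed.

End LinAlg.

Section Transfer.
Variables (l n : nat) (alpha : 'I_n -> 'rV[int]_l).

Lemma Zm_sq (S : {set 'I_n}) : #|S| = l -> exists M : 'M[int]_l,
  forall K : fieldType, \rank (Zm alpha K S) = \rank (map_mx (fun z : int => (z%:~R : K)) M).
Proof.
move=> HS.
case: (posnP l) => [l0|lpos].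
  exists 0 => K.
  have a := leq_trans (rank_leq_col (Zm alpha K S)) (eq_leq l0).
  have b := leq_trans (rank_leq_col (map_mx (fun z : int => (z%:~R : K)) (0 : 'M[int]_l))) (eq_leq l0).
  by move: a b; rewrite !leqn0 => /eqP -> /eqP ->.
have [i0 i0S] : exists i0, i0 \in S by apply/set0Pn; rewrite -card_gt0 HS.
pose sv (a : nat) := nth i0 (enum S) a.
have svS a : (a < l)%N -> sv a \in S.
  by move=> ha; rewrite -mem_enum mem_nth // -cardE HS.
pose M : 'M[int]_l := \matrix_(a, j) alpha (sv a) ord0 j.
exists M => K.
apply: eqmx_rank; apply/andP; split; apply/row_subP => i.
  case: (boolP (i \in S)) => iS; last first.
    rewrite (_ : row i _ = 0) ?sub0mx //; apply/rowP => j.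
    by rewrite !mxE (negbTE iS).
  have ha : (index i (enum S) < l)%N by rewrite -HS cardE index_mem mem_enum.
  rewrite (_ : row i _ = row (Ordinal ha) (map_mx (fun z : int => (z%:~R : K)) M)) ?row_sub //.
  apply/rowP => j; rewrite !mxE iS /sv /= nth_index //.
  by rewrite mem_enum.
rewrite (_ : row i _ = row (sv i) (Zm alpha K S)) ?row_sub //.
by apply/rowP => j; rewrite !mxE svS.
Qed.

Lemma transfer_full (F : fieldType) (S : {set 'I_n}) : #|S| = l ->
  \rank (Zm alpha F S) = l -> \rank (Zm alpha rat S) = l.
Proof.
move=> HS; have [M HM] := Zm_sq HS; rewrite !HM => hF.
have : (map_mx (fun z : int => (z%:~R : F)) M) \in unitmx.
  by rewrite -row_free_unit /row_free hF.
rewrite unitmxE unitfE det_map_mx => hd.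
have : (map_mx (fun z : int => (z%:~R : rat)) M) \in unitmx.
  rewrite unitmxE unitfE det_map_mx; apply: contra_neq hd => h.
  have : \det M = 0.
    by apply/eqP; rewrite -(intr_eq0 rat); apply/eqP.
  by move=> ->.
by rewrite -row_free_unit /row_free => /eqP.
Qed.

Lemma capE m (X : 'M[rat]_(m, l)) (B : {set 'I_n}) :
  (X <= \bigcap_(i in B) hyp alpha i)%MS = (X <= kermx (Zm alpha rat B)^T)%MS.
Proof.
apply/idP/idP.
  move/sub_bigcapmxP => H; rewrite sub_kermx; apply/eqP/matrixP => x i; rewrite !mxE.
  case: (boolP (i \in B)) => iB; last first.
    by rewrite big1 // => j _; rewrite !mxE (negbTE iB) mulr0.
  have := H i iB; rewrite /hyp sub_kermx => /eqP/matrixP/(_ x ord0); rewrite !mxE => E; rewrite -[RHS]E.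
  by apply: eq_bigr => j _; rewrite !mxE iB.
rewrite sub_kermx => /eqP/matrixP H; apply/sub_bigcapmxP => i iB.
rewrite /hyp sub_kermx; apply/eqP/matrixP => x y; rewrite !mxE.
have := H x i; rewrite !mxE => E; rewrite -[RHS]E (ord1 y).
by apply: eq_bigr => j _; rewrite !mxE iB.
Qed.

Lemma rk_rank (B : {set 'I_n}) : rk alpha B = \rank (Zm alpha rat B).
Proof.
rewrite /rk (@eqmx_rank _ _ _ _ (\bigcap_(i in B) hyp alpha i)%MS (kermx (Zm alpha rat B)^T)); last first.
  by apply/andP; split; [rewrite -capE|rewrite capE]; exact: submx_refl.
by rewrite mxrank_ker mxrank_tr subKn // rank_leq_col.
Qed.

End Transfer.

Lemma rank_eq (l n : nat) (alpha : 'I_n -> 'rV[int]_l) (F : fieldType)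
  (HK : forall S : {set 'I_n}, #|S| = l -> \rank (Zm alpha rat S) = l -> \rank (Zm alpha F S) = l)
  (Hfull : \rank (Zm alpha rat setT) = l) (B : {set 'I_n}) :
  \rank (Zm alpha F B) = \rank (Zm alpha rat B).
Proof.
have [S0 [_ _ iS0 rS0]] := @extend _ _ alpha rat _ _ (sub0set setT) (indep0 alpha rat).
have cS0 : #|S0| = l by rewrite -(eqP iS0) rS0 Hfull.
have fF : \rank (Zm alpha F setT) = l.
  apply/eqP; rewrite eqn_leq rank_leq_col /=.
  rewrite -{1}(HK S0 cS0 (etrans rS0 Hfull)); apply: mxrankS; apply: Z_sub; exact: subsetT.
apply/eqP; rewrite eqn_leq; apply/andP; split.
  have [T [_ sT iT rT]] := @extend _ _ alpha F _ _ (sub0set B) (indep0 alpha F).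
  have [S [sTS _ iS rS]] := @extend _ _ alpha F _ _ (subsetT T) iT.
  have cS : #|S| = l by rewrite -(eqP iS) rS fF.
  have iSQ : indep alpha rat S.
    by rewrite /indep (@transfer_full _ _ alpha F S cS) ?cS // (eqP iS) cS.
  have iTQ := indep_sub sTS iSQ.
  rewrite -rT (eqP iT) -(eqP iTQ); apply: mxrankS; exact: Z_sub.
have [T [_ sT iT rT]] := @extend _ _ alpha rat _ _ (sub0set B) (indep0 alpha rat).
have [S [sTS _ iS rS]] := @extend _ _ alpha rat _ _ (subsetT T) iT.
have cS : #|S| = l by rewrite -(eqP iS) rS Hfull.
have iSF : indep alpha F S.
  by rewrite /indep (HK S cS) ?cS // (eqP iS) cS.
have iTF := indep_sub sTS iSF.
rewrite -rT (eqP iT) -(eqP iTF); apply: mxrankS; exact: Z_sub.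
Qed.

Lemma expand_subsets (R : comPzRingType) (I : finType) (x : R) (A : {set I}) :
  (x + 1) ^+ #|A| = \sum_(B : {set I} | B \subset A) x ^+ #|B|.
Proof.
have [k hA] : exists k, #|A| = k by eexists.
rewrite hA; elim: k A hA => [|k IH] A hA.
  move/eqP: hA; rewrite cards_eq0 => /eqP ->.
  rewrite (big_pred1 set0) ?cards0 ?expr0 // => B; by rewrite subset0.
have [i iA] : exists i, i \in A by apply/set0Pn; rewrite -card_gt0 hA.
have hA' : #|A :\ i| = k by move: hA; rewrite (cardsD1 i A) iA add1n => [[]].
rewrite exprS (IH (A :\ i) hA') mulrDl mul1r mulr_sumr.
rewrite [RHS](bigID (fun B : {set I} => i \in B)) /=; congr (_ + _); last first.
  apply: eq_bigl => B; by rewrite subsetD1.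
rewrite [RHS](reindex_onto (fun C : {set I} => i |: C) (fun B => B :\ i)) /=; last first.
  by move=> B /andP [_ iB]; rewrite setD1K.
symmetry; apply: eq_big => [C|C].
  rewrite setU11 andbT subUset sub1set iA /=.
  apply/idP/idP.
    move=> /andP [sCA /eqP E]; rewrite subsetD1 sCA /=.
    by apply/negP => iC; move: iC; rewrite -{1}E !inE eqxx.
  rewrite subsetD1 => /andP [sCA iC]; rewrite sCA /=; by rewrite setU1K.
move=> /andP [_ /eqP E].
have iC : i \notin C by apply/negP => iC; move: iC; rewrite -{1}E !inE eqxx.
by rewrite cardsU1 iC add1n exprS.
Qed.

Lemma count_pts (l n : nat) (alpha : 'I_n -> 'rV[int]_l) (F : finFieldType)
  (B : {set 'I_n}) :
  #|[set P : 'rV[F]_l | B \subset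
      [set i : 'I_n | \sum_(j < l) red alpha F i ord0 j * P ord0 j == 0]]|
  = (#|F| ^ (l - \rank (Zm alpha F B)))%N.
Proof.
rewrite -mxrank_tr -mxrank_ker -card_rowg; apply: eq_card => P.
rewrite inE mem_rowg sub_kermx; apply/subsetP/eqP.
  move=> H; apply/matrixP => x i; rewrite (ord1 x) !mxE.
  case: (boolP (i \in B)) => iB; last first.
    by rewrite big1 // => j _; rewrite !mxE (negbTE iB) mulr0.
  have := H i iB; rewrite inE => /eqP E; rewrite -[RHS]E.
  by apply: eq_bigr => j _; rewrite !mxE iB mulrC.
move=> H i iB; rewrite inE.
have := congr1 (fun M : 'M[F]_(1, n) => M ord0 i) H; rewrite !mxE => E.
apply/eqP; rewrite -[RHS]E.
by apply: eq_bigr => j _; rewrite !mxE iB mulrC.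
Qed.

Unset Implicit Arguments.
Set Strict Implicit.
Theorem theorem4p17 (l n : nat) (alpha : 'I_n -> 'rV[int]_l)
  (Hprim : forall (i : 'I_n) (r : nat), prime r -> exists j : 'I_l, ~~ (r%:Z %| alpha i ord0 j)%Z)
  (Hdist : forall i j : 'I_n, i != j -> ~~ (hyp alpha i == hyp alpha j)%MS)
  (Hess : (\bigcap_(i in [set: 'I_n]) hyp alpha i == (0 : 'M[rat]_l))%MS)
  (le : rel 'X_{1..l}) (Hle : is_term_order le)
  (p : nat) (Hp : prime p)
  (Hgood : good_prime alpha p) (Hlucky : lucky_prime alpha le p)
  (k : nat) (Hk : (0 < k)%N) (F : finFieldType) (HF : #|F| = (p ^ k)%N) :
  coboundary_at alpha (p ^ k)%N
    = \sum_(P : 'rV[F]_l) 'X ^+ hcount alpha P.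
Proof.
have pc : p \in [pchar F] := card_finPcharP HF Hp.
have Hchar c : (c%:~R == 0 :> F) = (p%:Z %| c)%Z by rewrite (dvdz_pcharf pc).
have rkT : rk alpha setT = l by rewrite /rk (eqmx_rank Hess) mxrank0 subn0.
have Hfull : \rank (Zm alpha rat setT) = l by rewrite -rk_rank.
have HK (S : {set 'I_n}) : #|S| = l -> \rank (Zm alpha rat S) = l -> \rank (Zm alpha F S) = l.
  move=> cS rS; apply: (key_rank Hle Hchar cS) => //.
  by apply: Hlucky => //; rewrite rk_rank.
have req B := rank_eq HK Hfull B.
have e (A : {set 'I_n}) : ('X : {poly int}) ^+ #|A| = \sum_(B : {set 'I_n} | B \subset A) ('X - 1) ^+ #|B|.
  by rewrite -expand_subsets subrK.
rewrite /hcount; under eq_bigr => P _ do rewrite e.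
rewrite (exchange_big_dep xpredT) //=.
rewrite /coboundary_at /coboundary.
rewrite (_ : (fun c : {poly int} => c.[(p ^ k)%N%:R]) = horner_eval (p ^ k)%N%:R) //.
rewrite rmorph_sum /=; apply: eq_bigr => B _.
rewrite rmorphM /= map_polyC /= !rmorphXn rmorphB /= map_polyX rmorph1 /horner_eval hornerX.
rewrite (eq_bigl (fun P => P \in [set P : 'rV[F]_l | B \subset
      [set i : 'I_n | \sum_(j < l) red alpha F i ord0 j * P ord0 j == 0]]));
  last by move=> P; rewrite inE.
rewrite sumr_const count_pts req -rk_rank rkT HF.
by rewrite mulrC -[RHS]mulr_natr !natrX !rmorphXn /= polyC_natr.
Qed.
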